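(* Let $\mathcal H$ be any class of group-aware hypotheses $\mathcal X\times\{A,B\}\to\{0,1\}$ and $\mathcal D$ any distribution over $\mathcal X\times\{A,B\}\times\{0,1\}$. Assume there is an integer $c\ge1$ such that for each group $g\in\{A,B\}$, $\Pr_{\mathcal D}[y=1\wedge x\in g]\ge\Pr_{\mathcal D}[x\in g]/c$, and that both groups have positive probability. Suppose $h^*\in\mathcal H$ minimizes $\Pr_{\mathcal D}[h(x,z)\ne y]$ over all $h\in\mathcal H$ satisfying Equal Opportunity on $\mathcal D$. Then there are constants $C>0$, $\alpha_0\in(0,1)$ depending only on $c$ such that for every $\alpha\in[0,\alpha_0]$ and every corrupted distribution $\widetilde{\mathcal D}=(1-\alpha)\mathcal D+\alpha\mathcal Q$ ($\mathcal Q$ arbitrary), a robust fair-ERM learner for the Equal Opportunity constraint returns a hypothesis $\hat h$ in the $(P,Q)$-randomized expansion $\mathcal{PQ}(\mathcal H)$ satisfying Equal Opportunity on $\widetilde{\mathcal D}$ and $$\Big|\mathbb E_{\mathcal D}[\mathbf 1(\hat h(x,z)\ne y)]-\mathbb E_{\mathcal D}[\mathbf 1(h^*(x,z)\ne y)]\Big|\le C\sqrt\alpha;$$ that is, such a hypothesis exists in $\mathcal{PQ}(\mathcal H)$.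
   Context: Equal Opportunity of a (possibly randomized) hypothesis $h$ on a distribution: $\Pr[h(x,z)=1\mid y=1,z=A]=\Pr[h(x,z)=1\mid y=1,z=B]$, probabilities also over the hypothesis's randomness. $\mathcal{PQ}(\mathcal H)$ consists of randomized hypotheses obtained from some $h\in\mathcal H$ and parameters $p_A,q_A,p_B,q_B\in[0,1]$ that on input $(x,z)$ output $h(x,z)$ with probability $1-p_z$ and otherwise an independent $\mathrm{Bernoulli}(q_z)$ bit. Errors of randomized hypotheses are expected errors. *)

(* Defs.v *)
From HB Require Import structures.
From mathcomp Require Import all_boot all_order all_algebra.
From mathcomp Require Import all_classical all_reals all_analysis.
Set Implicit Arguments. Unset Strict Implicit. Unset Printing Implicit Defensive.
Import Order.TTheory GRing.Theory Num.Theory numFieldNormedType.Exports.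
Local Open Scope classical_set_scope.
Local Open Scope ring_scope.

(* Conventions:
   - the group attribute z ranges over bool, with group A := false, B := true;
   - a labelled example is a triple ((x, z), y) : X * bool * bool,
     with label y = true meaning y = 1;
   - a (group-aware) hypothesis is h : X -> bool -> bool. *)

Section Defs.
Context (R : realType) (d : measure_display) (X : measurableType d).

Definition example := (X * bool * bool)%type.

(* The (P,Q)-randomized hypothesis built from h and p_A,q_A,p_B,q_B:
   with probability 1 - p_z outputs h(x,z), otherwise an independent
   Bernoulli(q_z) bit.  p and q are indexed by the group (false = A,
   true = B). *)
Record pq_hyp := PQHyp {
  pq_base : X -> bool -> bool;
  pq_p : bool -> R;
  pq_q : bool -> R }.

Definition pq_prob1 (r : pq_hyp) (x : X) (z : bool) : R :=
  (1 - pq_p r z) * (pq_base r x z)%:R + pq_p r z * pq_q r z.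

Definition det_hyp (h : X -> bool -> bool) : pq_hyp :=
  PQHyp h (fun _ => 0) (fun _ => 0).

Definition PQ (H : set (X -> bool -> bool)) : set pq_hyp :=
  [set r | H (pq_base r) /\
           (forall g, 0 <= pq_p r g <= 1) /\ (forall g, 0 <= pq_q r g <= 1)].

Definition pq_err (D : probability example R) (r : pq_hyp) : R :=
  \int[D]_(s in [set: example])
     (if s.2 then 1 - pq_prob1 r s.1.1 s.1.2 else pq_prob1 r s.1.1 s.1.2).

Definition pos_grp (g : bool) : set example := [set s | s.2 && (s.1.2 == g)].
Definition grp (g : bool) : set example := [set s | s.1.2 == g].

Definition pq_tpr (D : probability example R) (r : pq_hyp) (g : bool) : R :=
  (\int[D]_(s in pos_grp g) pq_prob1 r s.1.1 s.1.2) / fine (D (pos_grp g)).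

Definition equal_opportunity (D : probability example R) (r : pq_hyp) : Prop :=
  pq_tpr D r false = pq_tpr D r true.

End Defs.

Arguments det_hyp {R d X} h.
Arguments grp {d} X g.
Arguments pos_grp {d} X g.

(* Main.v *)
Require Import Defs.
From HB Require Import structures.
From mathcomp Require Import all_boot all_order all_algebra.
From mathcomp Require Import all_classical all_reals all_analysis.
From mathcomp Require Import ring lra.
Import Order.TTheory GRing.Theory Num.Theory numFieldNormedType.Exports.
Local Open Scope classical_set_scope.
Local Open Scope ring_scope.

Section M.
Context (R : realType) (d : measure_display) (X : measurableType d).
Context (h : X -> bool -> bool)
  (hm : measurable_fun [set: X * bool] (fun p => h p.1 p.2)).

Lemma mF d2 (T2 : measurableType d2) (F : bool -> bool -> bool -> T2) :
  measurable_fun [set: example X] (fun s => F s.1.2 s.2 (h s.1.1 s.1.2)).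
Proof.
have mz : measurable_fun [set: example X] (fun s => s.1.2).
  exact: measurableT_comp measurable_snd measurable_fst.
have my : measurable_fun [set: example X] (fun s => s.2) by exact: measurable_snd.
have mv : measurable_fun [set: example X] (fun s => h s.1.1 s.1.2).
  exact: (measurableT_comp hm measurable_fst).
rewrite (_ : (fun s => _) = fun s => if s.1.2 then
   (if s.2 then (if h s.1.1 s.1.2 then F true true true else F true true false)
    else (if h s.1.1 s.1.2 then F true false true else F true false false))
   else
   (if s.2 then (if h s.1.1 s.1.2 then F false true true else F false true false)
    else (if h s.1.1 s.1.2 then F false false true else F false false false))).
  by repeat apply: measurable_fun_ifT => //.
by apply/funext => s; case: s.1.2; case: s.2; case: (h _ _).
Qed.

Lemma mE (G : bool -> bool -> bool -> bool) :
  measurable [set s : example X | G s.1.2 s.2 (h s.1.1 s.1.2)].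
Proof.
have := @mF _ _ G measurableT [set true] I; rewrite setTI.
by congr measurable; apply/seteqP; split => s /=.
Qed.

Variable mu : probability (example X) R.

Lemma iF (F : bool -> bool -> bool -> R) (A : set (example X)) :
  measurable A ->
  mu.-integrable A (EFin \o (fun s => F s.1.2 s.2 (h s.1.1 s.1.2))).
Proof.
move=> mA; apply: measurable_bounded_integrable => //.
- by apply: (le_lt_trans (probability_le1 mu mA)); rewrite ltry.
- by apply: (measurable_funS measurableT) => //; exact: mF.
pose M := \sum_(z : bool) \sum_(y : bool) \sum_(v : bool) `|F z y v|.
exists M; split; first by rewrite num_real.
move=> M' hM' s _; apply: le_trans (ltW hM').
rewrite /M.
have := normr_ge0 (F true true true); have := normr_ge0 (F true true false).
have := normr_ge0 (F true false true); have := normr_ge0 (F true false false).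
have := normr_ge0 (F false true true); have := normr_ge0 (F false true false).
have := normr_ge0 (F false false true); have := normr_ge0 (F false false false).
case: s.1.2; case: s.2; case: (h _ _);
  rewrite !big_bool /=; lra.
Qed.


Lemma intI (G : bool -> bool -> bool -> bool) (A : set (example X)) :
  measurable A ->
  \int[mu]_(s in A) (G s.1.2 s.2 (h s.1.1 s.1.2))%:R =
  fine (mu ([set s : example X | G s.1.2 s.2 (h s.1.1 s.1.2)] `&` A)).
Proof.
move=> mA; rewrite /Rintegral -integral_indic //; last exact: mE.
congr fine; apply: eq_integral => s _; rewrite indicE.
congr (_%:R)%:E; case: (boolP (G s.1.2 s.2 (h s.1.1 s.1.2))) => H.
  by rewrite mem_set.
by rewrite memNset //=; apply/negP.
Qed.

Lemma intF (G : bool -> bool -> bool -> bool) (a b : R) (A : set (example X)) :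
  measurable A ->
  \int[mu]_(s in A) (a * (G s.1.2 s.2 (h s.1.1 s.1.2))%:R + b) =
  a * fine (mu ([set s : example X | G s.1.2 s.2 (h s.1.1 s.1.2)] `&` A))
  + b * fine (mu A).
Proof.
move=> mA.
rewrite RintegralD //; last 2 first.
- exact: (iF (fun z y v => a * (G z y v)%:R)).
- exact: (iF (fun _ _ _ => b)).
rewrite RintegralZl //; last exact: (iF (fun z y v => (G z y v)%:R)).
by rewrite intI // Rintegral_cst.
Qed.


Definition rmod (m : bool) (pm qm : R) : pq_hyp R X :=
  PQHyp h (fun g => if g == m then pm else 0) (fun g => if g == m then qm else 0).

Lemma errB (m : bool) (pm qm : R) : 0 <= pm <= 1 -> 0 <= qm <= 1 ->
  `|pq_err mu (rmod m pm qm) - pq_err mu (det_hyp h)| <=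
  pm * fine (mu (grp X m)).
Proof.
move=> /andP[p0 p1] /andP[q0 q1].
pose P g := if g == m then pm else 0.
pose Q g := if g == m then qm else 0.
pose F1 (z y v : bool) := if y then 1 - ((1 - P z) * v%:R + P z * Q z)
                          else (1 - P z) * v%:R + P z * Q z.
pose F2 (z y v : bool) := if y then 1 - ((1 - 0) * v%:R + 0 * 0)
                          else (1 - 0) * v%:R + 0 * (0:R).
rewrite /pq_err -RintegralB //; last 2 first.
- exact: (iF F1).
- exact: (iF F2).
apply: le_trans.
  apply: le_normr_Rintegral => //.
  exact: (iF (fun z y v => F1 z y v - F2 z y v)).
have -> : grp X m = [set s : example X | (fun z y v => z == m) s.1.2 s.2 (h s.1.1 s.1.2)] `&` setT.
  by rewrite setIT.
rewrite -[X in _ <= X]addr0 -(mul0r (fine (mu setT))) -(@intF (fun z y v => z == m) pm 0 setT measurableT).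
apply: le_Rintegral => //.
- exact: (iF (fun z y v => `|F1 z y v - F2 z y v|)).
- exact: (iF (fun z y v => pm * (z == m)%:R + 0)).
move=> s _.
change (`|F1 s.1.2 s.2 (h s.1.1 s.1.2) - F2 s.1.2 s.2 (h s.1.1 s.1.2)| <=
  pm * (s.1.2 == m)%:R + 0).
move: s.1.2 s.2 (h s.1.1 s.1.2) => z y v.
rewrite /F1 /F2 /P /Q; clear F1 F2 P Q.
case: m; case: z; case: y; case: v => /=; rewrite ler_norml; by apply/andP; split; nra.
Qed.


Lemma mpos g : measurable (pos_grp X g).
Proof. exact: (mE (fun z y v => y && (z == g))). Qed.

Lemma mgrp g : measurable (grp X g).
Proof. exact: (mE (fun z y v => z == g)). Qed.

Lemma mHs g : measurable ([set s : example X | h s.1.1 s.1.2] `&` pos_grp X g).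
Proof. apply: measurableI; [exact: (mE (fun z y v => v))|exact: mpos]. Qed.

Lemma tpr_det g : pq_tpr mu (det_hyp h) g =
  fine (mu ([set s : example X | h s.1.1 s.1.2] `&` pos_grp X g)) /
  fine (mu (pos_grp X g)).
Proof.
rewrite /pq_tpr.
have -> := (@intF (fun z y v => v) (1 - 0) (0 * 0) _ (mpos g)).
by rewrite subr0 mul1r !mul0r addr0.
Qed.

Lemma tpr_mod m pm qm g : fine (mu (pos_grp X g)) != 0 ->
  pq_tpr mu (rmod m pm qm) g =
  (1 - (if g == m then pm else 0)) * pq_tpr mu (det_hyp h) g +
  (if g == m then pm else 0) * (if g == m then qm else 0).
Proof.
move=> nz; rewrite tpr_det /pq_tpr.
rewrite (@eq_Rintegral _ _ _ mu _ (fun s => (1 - (if g == m then pm else 0)) *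
   ((fun z y v => v) s.1.2 s.2 (h s.1.1 s.1.2))%:R +
   (if g == m then pm else 0) * (if g == m then qm else 0))); last first.
  move=> s; rewrite inE /pos_grp /= => /andP[_ /eqP e].
  by rewrite /pq_prob1 /= e.
rewrite (@intF (fun z y v => v) _ _ _ (mpos g)) /=.
by field.
Qed.

End M.
Section Ar.
Variable R : realFieldType.

Lemma lowerL (tH tL : R) : 0 <= tL -> tL <= tH ->
  exists p, [/\ 0 <= p <= 1, (1 - p) * tH + p * 0 = tL, p * tH = tH - tL
            & tH = 0 -> p = 0].
Proof.
move=> h0 h1; have [e|nz] := eqVneq tH 0.
  exists 0; split => //; try lra; by rewrite lexx ler01.
have hp : 0 < tH by rewrite lt_neqAle eq_sym nz /=; lra.
exists ((tH - tL) / tH); split.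
- apply/andP; split; first by apply: divr_ge0; lra.
  by rewrite ler_pdivrMr //; lra.
- by field.
- by field.
- by move=> e; move: nz; rewrite e eqxx.
Qed.

Lemma raiseL (tH tL : R) : 0 <= tL -> tL <= tH -> tH <= 1 ->
  exists p, [/\ 0 <= p <= 1, (1 - p) * tL + p * 1 = tH, p * (1 - tL) = tH - tL
            & tL = 1 -> p = 0].
Proof.
move=> h0 h1 h2; have [e|nz] := eqVneq tL 1.
  exists 0; split => //; try lra; by rewrite lexx ler01.
have hp : 0 < 1 - tL by rewrite subr_gt0 lt_neqAle nz /=; lra.
exists ((tH - tL) / (1 - tL)); split.
- apply/andP; split; first by apply: divr_ge0; lra.
  by rewrite ler_pdivrMr //; lra.
- by field; lra.
- by field; lra.
- by move=> e; move: nz; rewrite e eqxx.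
Qed.

Lemma core (a s tH tL PH PL t : R) :
  0 <= s -> s <= 1/2 -> s * s = a ->
  0 <= tL -> tL <= tH -> tH <= 1 -> 0 < PH -> PH <= 1 -> 0 < PL -> PL <= 1 ->
  - (2 * a) <= PH * (tH - t) <= 2 * a ->
  - (2 * a) <= PL * (tL - t) <= 2 * a ->
  exists b p q, [/\ 0 <= p <= 1, 0 <= q <= 1 &
    if b then (1 - p) * tH + p * q = tL /\ p * PH <= 4 * s
    else (1 - p) * tL + p * q = tH /\ p * PL <= 4 * s].
Proof.
move=> s0 s1 sa tL0 tLH tH1 PH0 PH1 PL0 PL1 /andP[dH1 dH2] /andP[dL1 dL2].
have q0 : 0 <= (0:R) <= 1 by rewrite lexx ler01.
have q1 : 0 <= (1:R) <= 1 by rewrite lexx ler01.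
have [hPL|hPL] := leP PH PL.
- have bd : PH * (tH - tL) <= 4 * a.
    have [tt|tt] := leP tL t; nra.
  have [hs|hs] := leP s tH.
  + have [p [/andP[p0 p1] e1 e2 e3]] := lowerL _ _ tL0 tLH.
    exists true, p, 0; split => //; [by rewrite p0 p1|split => //].
    have [z|nz] := eqVneq tH 0; first by rewrite e3 // mul0r; lra.
    have hp : 0 < tH by rewrite lt_neqAle eq_sym nz /=; lra.
    have : p * PH * tH <= 4 * s * tH by nra.
    by rewrite ler_pM2r.
  + have [p [/andP[p0 p1] e1 e2 e3]] := raiseL _ _ tL0 tLH tH1.
    exists false, p, 1; split => //; [by rewrite p0 p1|split => //].
    nra.
- have bd : PL * (tH - tL) <= 4 * a.
    have [tt|tt] := leP tH t; nra.
  have [hs|hs] := leP tL (1 - s).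
  + have [p [/andP[p0 p1] e1 e2 e3]] := raiseL _ _ tL0 tLH tH1.
    exists false, p, 1; split => //; [by rewrite p0 p1|split => //].
    have [z|nz] := eqVneq tL 1; first by rewrite e3 // mul0r; lra.
    have hp : 0 < 1 - tL by rewrite subr_gt0 lt_neqAle nz /=; lra.
    have : p * PL * (1 - tL) <= 4 * s * (1 - tL) by nra.
    by rewrite ler_pM2r.
  + have [p [/andP[p0 p1] e1 e2 e3]] := lowerL _ _ tL0 tLH.
    exists true, p, 0; split => //; [by rewrite p0 p1|split => //].
    nra.
Qed.


Lemma dev (a P K Qp L t : R) : 0 <= a -> a <= 1/2 -> 0 < P -> 0 <= L -> L <= Qp ->
  Qp <= 1 -> 0 <= t -> t <= 1 -> K = t * P ->
  [/\ 0 < (1 - a) * P + a * Qp,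
      0 <= ((1 - a) * K + a * L) / ((1 - a) * P + a * Qp) <= 1 &
      - (2 * a) <= P * (((1 - a) * K + a * L) / ((1 - a) * P + a * Qp) - t)
         <= 2 * a].
Proof.
move=> a0 a1 P0 L0 LQ Q1 t0 t1 eK.
have Pt0 : 0 < (1 - a) * P + a * Qp by nra.
set Pt := (1 - a) * P + a * Qp in Pt0 *.
set Kt := (1 - a) * K + a * L.
have uPt : Kt / Pt * Pt = Kt by field; rewrite gt_eqF.
set u := Kt / Pt in uPt *.
have key : P * (u - t) * Pt = P * a * (L - t * Qp).
  rewrite mulrBr mulrBl -mulrA uPt /Kt /Pt eK; ring.
have Pa : 0 <= P * a by apply: mulr_ge0 => //; exact: ltW.
have e1 : 0 <= 1 - (L - t * Qp) by nra.
have e1' : 0 <= 1 + (L - t * Qp) by nra.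
have h1 := mulr_ge0 Pa e1.
have h1' := mulr_ge0 Pa e1'.
have h2 : 0 <= P * a * (1 - 2 * a) by apply: mulr_ge0 => //; lra.
have h3 : 0 <= a * a * Qp by apply: mulr_ge0 => //; [exact: mulr_ge0|lra].
have hA : P * (u - t) * Pt <= 2 * a * Pt.
  rewrite key /Pt; lra.
have hB : - (2 * a) * Pt <= P * (u - t) * Pt.
  rewrite key /Pt; lra.
split => //.
- apply/andP; split; first by rewrite /u; apply: divr_ge0; rewrite /Kt; nra.
  by rewrite /u ler_pdivrMr // mul1r /Kt /Pt; nra.
- by apply/andP; split; [move: hB|move: hA]; rewrite ler_pM2r.
Qed.

End Ar.

Lemma pfin (R : realType) (d' : measure_display) (T : measurableType d')
  (mu : probability T R) (A : set T) : measurable A ->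
  mu A = (fine (mu A))%:E /\ 0 <= fine (mu A) <= 1.
Proof.
move=> mA; have h0 := measure_ge0 mu A; have h1 := probability_le1 mu mA.
have fn : mu A \is a fin_num by rewrite ge0_fin_numE // (le_lt_trans h1) // ltry.
split; first by rewrite fineK.
by rewrite fine_ge0 //= -lee_fin fineK.
Qed.

Arguments pfin {R d' T} mu {A}.

Theorem mainTheorem7 (R : realType) (c : nat) (hc : (1 <= c)%N) :
  exists (C alpha0 : R), 0 < C /\ 0 < alpha0 < 1 /\
  forall (d : measure_display) (X : measurableType d)
         (H : set (X -> bool -> bool)) (D : probability (example X) R)
         (hstar : X -> bool -> bool),
    (forall h, H h -> measurable_fun [set: X * bool] (fun p => h p.1 p.2)) ->
    (forall g : bool, (D (grp X g) / c%:R%:E <= D (pos_grp X g))%E) ->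
    (forall g : bool, (0 < D (grp X g))%E) ->
    H hstar -> equal_opportunity D (det_hyp (R:=R) hstar) ->
    (forall h, H h -> equal_opportunity D (det_hyp (R:=R) h) ->
       pq_err D (det_hyp (R:=R) hstar) <= pq_err D (det_hyp (R:=R) h)) ->
    forall alpha : R, 0 <= alpha <= alpha0 ->
    forall (Q Dt : probability (example X) R),
      (forall A : set (example X), measurable A ->
         Dt A = ((1 - alpha)%:E * D A + alpha%:E * Q A)%E) ->
      exists r, PQ H r /\ equal_opportunity Dt r /\
        `| pq_err D r - pq_err D (det_hyp (R:=R) hstar) | <= C * Num.sqrt alpha.
Proof.
have c0 : (0 : R) < c%:R by rewrite ltr0n.
exists (4 * c%:R), (1/4); split; first by rewrite mulr_gt0.
split; first lra.
move=> d X H D hs hmeas hcg hgp Hhs EO _ a /andP[a0 a1] Q Dt hDt.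
have hm := hmeas hs Hhs.
pose Hs := [set s : example X | hs s.1.1 s.1.2].
pose P g := fine (D (pos_grp X g)).
pose N g := fine (D (grp X g)).
pose K g := fine (D (Hs `&` pos_grp X g)).
pose Qp g := fine (Q (pos_grp X g)).
pose L g := fine (Q (Hs `&` pos_grp X g)).
have mix : forall A, measurable A ->
    fine (Dt A) = (1 - a) * fine (D A) + a * fine (Q A).
  move=> A mA; rewrite hDt // (pfin D mA).1 (pfin Q mA).1.
  by rewrite -!EFinM -EFinD.
have mpos' := @mpos _ _ _ hm.
have mHs' := @mHs _ _ _ hm.
have mgrp' := @mgrp _ _ _ hm.
have mHs0 : measurable Hs := @mE _ _ _ hm (fun _ _ v => v).
have Pb g : 0 <= P g <= 1 by exact: (pfin D (mpos' g)).2.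
have Nb g : 0 <= N g <= 1 by exact: (pfin D (mgrp' g)).2.
have Qb g : 0 <= Qp g <= 1 by exact: (pfin Q (mpos' g)).2.
have Lb g : 0 <= L g <= 1 by exact: (pfin Q (mHs' g)).2.
have KP g : K g <= P g.
  rewrite /K /P -lee_fin -(pfin D (mHs' g)).1 -(pfin D (mpos' g)).1.
  by apply: measureIr => //; exact: mpos'.
have LQ g : L g <= Qp g.
  rewrite /L /Qp -lee_fin -(pfin Q (mHs' g)).1 -(pfin Q (mpos' g)).1.
  by apply: measureIr => //; exact: mpos'.
have NcP g : 0 < N g /\ N g <= c%:R * P g.
  have := hcg g; have := hgp g.
  rewrite (pfin D (mgrp' g)).1 (pfin D (mpos' g)).1 -/(N g) -/(P g).
  rewrite lte_fin => N0; rewrite inver gt_eqF // -EFinM lee_fin.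
  by rewrite ler_pdivrMr // mulrC.
have P0 g : 0 < P g.
  have [N0 NP] := NcP g.
  have : 0 < c%:R * P g by lra.
  by rewrite pmulr_rgt0.
rewrite /equal_opportunity !(@tpr_det _ _ _ _ hm D) in EO.
change (K false / P false = K true / P true) in EO.
pose t := K false / P false.
have Kt g : K g = t * P g.
  have hP := P0 g; case: g hP => hP; rewrite /t.
    by rewrite EO; field; exact: lt0r_neq0.
  by field; exact: lt0r_neq0.
have t01 : 0 <= t <= 1.
  have hK : 0 <= K false.
    by rewrite /K fine_ge0 // measure_ge0.
  rewrite /t; apply/andP; split; first by apply: divr_ge0 => //; exact: ltW.
  by rewrite ler_pdivrMr // mul1r.
pose tt g := pq_tpr Dt (det_hyp hs) g.
have ttE g : tt g = ((1 - a) * K g + a * L g) / ((1 - a) * P g + a * Qp g).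
  by rewrite /tt (@tpr_det _ _ _ _ hm Dt) !mix.
have a12 : a <= 1/2 by lra.
have L0 g : 0 <= L g by case/andP: (Lb g).
have Q1 g : Qp g <= 1 by case/andP: (Qb g).
have /andP[t0 t1] := t01.
have dv g := @dev R a (P g) (K g) (Qp g) (L g) t a0 a12 (P0 g)
   (L0 g) (LQ g) (Q1 g) t0 t1 (Kt g).
have nz g : fine (Dt (pos_grp X g)) != 0.
  by rewrite mix // gt_eqF //; case: (dv g).
pose s := Num.sqrt a.
have s0 : 0 <= s by exact: sqrtr_ge0.
have ss : s * s = a by rewrite -expr2 sqr_sqrtr.
have s12 : s <= 1/2 by nra.
suff fin : forall hi : bool, tt (~~hi) <= tt hi ->
  exists r, PQ H r /\ equal_opportunity Dt r /\
        `| pq_err D r - pq_err D (det_hyp (R:=R) hs) | <= 4 * c%:R * Num.sqrt a.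
  have [le|lt] := leP (tt false) (tt true).
    exact: (fin true).
  by apply: (fin false); exact: ltW.
move=> hi hle.
move: (dv hi) (dv (~~hi)); rewrite -!ttE.
move=> -[_ /andP[tH0 tH1] dH] [_ /andP[tL0 tL1] dL].
have PH1 : P hi <= 1 by case/andP: (Pb hi).
have PL1 : P (~~hi) <= 1 by case/andP: (Pb (~~hi)).
have [b [p [q [pr qr Hb]]]] := @core R a s (tt hi) (tt (~~hi)) (P hi) (P (~~hi)) t
  s0 s12 ss tL0 hle tH1 (P0 hi) PH1 (P0 (~~hi)) PL1 dH dL.
have [m [eqm bdm]] : exists m, (1 - p) * tt m + p * q = tt (~~m) /\ p * P m <= 4 * s.
  by case: b Hb => -[e bd]; [exists hi | exists (~~hi); rewrite negbK].
exists (@rmod R _ X hs m p q); split.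
  rewrite /PQ /=; split => //; split => g; case: (g == m) => //; by rewrite lexx ler01.
split.
  rewrite /equal_opportunity (@tpr_mod _ _ _ _ hm Dt m p q false (nz false)).
  rewrite (@tpr_mod _ _ _ _ hm Dt m p q true (nz true)) -/(tt false) -/(tt true).
  by case: m eqm {bdm} => /= e; lra.
apply: le_trans; first exact: (@errB _ _ _ _ hm D m p q pr qr).
have [N0 NP] := NcP m.
have /andP[p0 p1] := pr.
rewrite -/(N m) -/s.
have h1 : p * N m <= p * (c%:R * P m) by rewrite ler_wpM2l.
have h2 : c%:R * (p * P m) <= c%:R * (4 * s) by rewrite ler_wpM2l // ltW.
lra.
Qed.
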